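(* Let $d,g\ge 1$ be integers and $n=dg$. In the network $\mathrm{POPS}(d,g)$, any permutation $\pi$ of $\{0,\dots,n-1\}$ can be routed using one slot when $d=1$ and $2\lceil d/g\rceil$ slots when $d>1$.
   Context: The network $\mathrm{POPS}(d,g)$ (Partitioned Optical Passive Stars network) has $n=dg$ processors indexed $0,\dots,n-1$; processor $i$ belongs to group $\mathrm{group}(i):=\lfloor i/d\rfloor\in\{0,\dots,g-1\}$, so each group has $d$ processors. For each pair of groups $a,b\in\{0,\dots,g-1\}$ there is a coupler $c(b,a)$ whose sources are the processors of group $a$ and whose destinations are the processors of group $b$ ($g^2$ couplers in total). Processor $i$ can transmit to the couplers $c(a,\mathrm{group}(i))$, $a=0,\dots,g-1$, and can receive from the couplers $c(\mathrm{group}(i),b)$, $b=0,\dots,g-1$. Computation proceeds in synchronous steps called slots: in one slot each processor, in parallel, performs local computation, sends one packet to any subset of its transmitters (couplers), and receives a packet from one of its receivers (obtaining the packet sent on that coupler in that slot); it is required that no two processors send a packet to the same coupler in the same slot. Processors may store packets in local memory between slots. Routing a permutation $\pi$ of $\{0,\dots,n-1\}$ means: initially processor $i$ holds a packet $p_i$ with destination $\pi(i)$, for each $i$, and at the end each packet $p_i$ must be at processor $\pi(i)$. *)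

(* Defs.v *)
From mathcomp Require Import all_boot fingroup perm.
Set Implicit Arguments. Unset Strict Implicit. Unset Printing Implicit Defensive.

(* Processors are 'I_n (n = d*g); processor i is in group i %/ d.
   Packets are identified by their origin processor (packet p_i is named i).
   A coupler c(b,a) is determined by its source group a and destination group b. *)

(* One slot: each processor optionally sends one packet to a set of couplers
   c(a, group i), given by the set A of destination groups a; and optionally
   chooses one receiver, i.e. a coupler c(group j, b), given by b. *)
Record slot (n g : nat) := Slot {
  snd : 'I_n -> option ('I_n * {set 'I_g});
  rcv : 'I_n -> option 'I_g }.

(* The slot is legal given current memories: a processor only sends a packet it
   holds, and no two processors send on the same coupler (two distinct
   processors of the same source group use disjoint sets of destination groups;
   processors of different groups use different couplers anyway). *)
Definition valid_slot (d n g : nat) (mem : 'I_n -> {set 'I_n}) (s : slot n g) : Prop :=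
  (forall i p A, snd s i = Some (p, A) -> p \in mem i) /\
  (forall (i i' : 'I_n) p p' A A', i != i' -> i %/ d = i' %/ d ->
     snd s i = Some (p, A) -> snd s i' = Some (p', A') -> [disjoint A & A']).

Definition received (d n g : nat) (s : slot n g) (j : 'I_n) : {set 'I_n} :=
  match rcv s j with
  | None => set0
  | Some b => [set p | [exists i : 'I_n, (i %/ d == val b) &&
                 (match snd s i with
                  | Some (q, A) => (q == p) && [exists a in A, val a == j %/ d]
                  | None => false end)]]
  end.

Definition step (d n g : nat) (mem : 'I_n -> {set 'I_n}) (s : slot n g) : 'I_n -> {set 'I_n} :=
  fun j => mem j :|: received d s j.

Fixpoint routes_from (d n g : nat) (pi : {perm 'I_n}) (mem : 'I_n -> {set 'I_n})
    (sched : seq (slot n g)) : Prop :=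
  match sched with
  | [::] => forall i, i \in mem (pi i)
  | s :: rest => valid_slot d mem s /\ routes_from d pi (step d mem s) rest
  end.

Definition routes (d g : nat) (pi : {perm 'I_(d * g)}) (sched : seq (slot (d * g) g)) : Prop :=
  routes_from d pi (fun i => [set i]) sched.

Definition ceil_div (m k : nat) : nat := (m + k - 1) %/ k.

(* Main.v *)
Require Import Defs.
From mathcomp Require Import all_boot fingroup perm.
From mathcomp Require Import zify.
Set Implicit Arguments. Unset Strict Implicit. Unset Printing Implicit Defensive.

Section Hall.
Variables (T U : finType) (y00 : U).
Definition nbr (R : T -> U -> bool) (S : {set T}) : {set U} :=
  [set y | [exists x in S, R x y]].

Lemma nbrU R (A B : {set T}) : nbr R (A :|: B) = nbr R A :|: nbr R B.
Proof.
apply/setP=> y; rewrite !inE; apply/idP/idP.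
  case/existsP=> x /andP[]; rewrite inE => /orP[xA|xA] Rx; apply/orP; [left|right]; apply/existsP; exists x; by rewrite xA.
by case/orP=> /existsP[x /andP[xA Rx]]; apply/existsP; exists x; rewrite inE xA ?orbT.
Qed.

Lemma nbrS R (A B : {set T}) : A \subset B -> nbr R A \subset nbr R B.
Proof.
move=> AB; apply/subsetP=> y; rewrite !inE => /existsP[x /andP[xA Rx]].
by apply/existsP; exists x; rewrite (subsetP AB) // Rx.
Qed.

Lemma hall n : forall (R : T -> U -> bool) (X : {set T}), #|X| <= n ->
  (forall S : {set T}, S \subset X -> #|S| <= #|nbr R S|) ->
  exists f : T -> U, {in X, forall x, R x (f x)} /\ {in X &, injective f}.
Proof.
elim: n => [|n IH] R X hX hall.
  have X0 : X = set0 by apply/eqP; rewrite -cards_eq0; lia.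
  by exists (fun _ => y00); split=> x; rewrite X0 inE.
case: (leqP #|X| n) => hXn; first exact: IH.
have {hXn} hX' : #|X| = n.+1 by lia.
case: (boolP [exists S : {set T}, [&& S \proper X, S != set0 & #|nbr R S| == #|S|]]).
  case/existsP=> S /and3P[pSX S0 /eqP tight].
  have sSX := proper_sub pSX.
  have [f1 [f1R f1i]] : exists f : T -> U, {in S, forall x, R x (f x)} /\ {in S &, injective f}.
    apply: IH; first by have := proper_card pSX; lia.
    by move=> S' sS'; apply: hall; apply: subset_trans sSX.
  pose R' x y := R x y && (y \notin nbr R S).
  have [f2 [f2R f2i]] : exists f : T -> U, {in X :\: S, forall x, R' x (f x)} /\ {in X :\: S &, injective f}.
    apply: IH.
      have := cardsD X S; rewrite (setIidPr sSX).
      have : 0 < #|S| by rewrite card_gt0.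
      lia.
    move=> T' sT'.
    have -> : nbr R' T' = nbr R T' :\: nbr R S.
      apply/setP=> y; rewrite in_setD [y \in nbr R' T']inE [y \in nbr R T']inE /R'; apply/idP/idP.
        case/existsP=> x /andP[xT /andP[Rx ny]]; rewrite ny /=; apply/existsP; exists x; by rewrite xT.
      case/andP=> ny /existsP[x /andP[xT Rx]]; apply/existsP; exists x; by rewrite xT Rx.
    have TS : T' :&: S = set0.
      apply/setP=> x; rewrite !inE; apply/negbTE; apply/negP=> /andP[xT xS].
      by move: (subsetP sT' x xT); rewrite inE xS.
    have h1 := hall (T' :|: S).
    have : T' :|: S \subset X.
      by apply/subsetP=> x; rewrite inE => /orP[/(subsetP sT')|/(subsetP sSX)] //; rewrite inE => /andP[].
    move=> /h1; rewrite nbrU.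
    have := cardsUI T' S; rewrite TS cards0.
    have := cardsUI (nbr R T') (nbr R S).
    have := cardsD (nbr R T') (nbr R S).
    lia.
  exists (fun x => if x \in S then f1 x else f2 x); split.
    move=> x xX; case: ifP => xS; first exact: f1R.
    by have /andP[] := f2R x ltac:(by rewrite inE xS).
  move=> x x' xX x'X; case: ifP => xS; case: ifP => x'S.
  - exact: f1i.
  - move=> e; have /andP[_] := f2R x' ltac:(by rewrite inE x'S).
    by rewrite -e inE; case/negP; apply/existsP; exists x; rewrite xS f1R.
  - move=> e; have /andP[_] := f2R x ltac:(by rewrite inE xS).
    by rewrite e inE; case/negP; apply/existsP; exists x'; rewrite x'S f1R.
  - by apply: f2i; rewrite inE ?xS ?x'S.
rewrite negb_exists => /forallP nt.
have : 0 < #|X| by lia.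
case/card_gt0P=> x0 x0X.
have : 0 < #|nbr R [set x0]|.
  have := hall [set x0]; rewrite sub1set cards1; apply; exact x0X.
case/card_gt0P=> y0; rewrite inE => /existsP[x1 /andP[]]; rewrite inE => /eqP -> Rxy0.
pose R' x y := R x y && (y != y0).
have [f2 [f2R f2i]] : exists f : T -> U, {in X :\ x0, forall x, R' x (f x)} /\ {in X :\ x0 &, injective f}.
  apply: IH; first by have := cardsD1 x0 X; rewrite x0X; lia.
  move=> T' sT'.
  case: (eqVneq T' set0) => [->|T0]; first by rewrite cards0.
  have pT : T' \proper X.
    rewrite properEneq; apply/andP; split.
      by apply/eqP=> e; move: (subsetP sT' x0); rewrite e x0X !inE eqxx => /(_ isT).
    by apply: subset_trans sT' (subsetDl _ _).
  have := nt T'; rewrite pT T0 /= => ne.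
  have h := hall T' (proper_sub pT).
  have : nbr R T' :\ y0 \subset nbr R' T'.
    apply/subsetP=> y; rewrite !inE => /andP[ny /existsP[x /andP[xT Rx]]].
    by apply/existsP; exists x; rewrite xT /R' Rx ny.
  move/subset_leq_card.
  have := cardsD1 y0 (nbr R T').
  move: ne h; case: (y0 \in nbr R T'); rewrite /=; lia.
exists (fun x => if x == x0 then y0 else f2 x); split.
  move=> x xX; case: eqP => [->|/eqP ne] //.
  by have /andP[] := f2R x ltac:(by rewrite !inE ne).
move=> x x' xX x'X; case: eqP => [->|/eqP ne]; case: eqP => [->|/eqP ne'] //.
- move=> e; have /andP[_] := f2R x' ltac:(by rewrite !inE ne'). by rewrite -e eqxx.
- move=> e; have /andP[_] := f2R x ltac:(by rewrite !inE ne). by rewrite e eqxx.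
- by apply: f2i; rewrite !inE ?ne ?ne'.
Qed.
End Hall.

Lemma card_part (E J : finType) (A : {set E}) (h : E -> J) (S : {set J}) :
  #|[set e in A | h e \in S]| = \sum_(a in S) #|[set e in A | h e == a]|.
Proof.
rewrite -sum1_card (partition_big h (mem S)) /=; last by move=> e; rewrite inE => /andP[].
apply: eq_bigr => a aS; rewrite -sum1_card; apply: eq_bigl => e; rewrite !inE.
by case: eqP => [->|]; rewrite ?aS ?andbT ?andbF.
Qed.

Section Konig.
Variables (E U V : finType) (u : E -> U) (v : E -> V).

Lemma konig k : forall F : {set E},
  (forall a, #|[set e in F | u e == a]| = k) ->
  (forall b, #|[set e in F | v e == b]| = k) ->
  exists col : E -> nat, {in F, forall e, col e < k} /\
    {in F &, forall e e', u e = u e' -> col e = col e' -> e = e'} /\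
    {in F &, forall e e', v e = v e' -> col e = col e' -> e = e'}.
Proof.
elim: k => [|k IH] F hu hv.
  have F0 : F = set0.
    apply/setP=> e; rewrite inE; apply/negbTE/negP=> eF.
    by have := hu (u e); move/eqP; rewrite cards_eq0 => /eqP/setP/(_ e); rewrite !inE eF eqxx.
  by exists (fun _ => 0); rewrite F0; split; [|split] => e; rewrite inE.
case: (pickP (fun _ : V => true)) => [y0 _|V0]; last first.
  exists (fun _ => 0); split; [|split] => e; by have := V0 (v e).
pose R a b := [exists e in F, (u e == a) && (v e == b)].
have cardU : #|[set e in F | u e \in [set: U]]| = k.+1 * #|U|.
  by rewrite card_part (eq_bigr (fun _ => k.+1)) => [|a _]; [rewrite sum_nat_const cardsT mulnC | exact: hu].
have cardV : #|[set e in F | v e \in [set: V]]| = k.+1 * #|V|.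
  by rewrite card_part (eq_bigr (fun _ => k.+1)) => [|a _]; [rewrite sum_nat_const cardsT mulnC | exact: hv].
have eUV : #|U| = #|V|.
  have : #|[set e in F | u e \in [set: U]]| = #|[set e in F | v e \in [set: V]]|.
    by apply: eq_card => e; rewrite !inE.
  rewrite cardU cardV => /eqP; rewrite eqn_mul2l /= => /eqP //.
have [f [fR fi]] : exists f : U -> V, {in [set: U], forall x, R x (f x)} /\ {in [set: U] &, injective f}.
  apply: (hall y0 (n := #|[set: U]|)) => // S _.
  have : [set e in F | u e \in S] \subset [set e in F | v e \in nbr R S].
    apply/subsetP=> e; rewrite !inE => /andP[eF ueS]; rewrite eF /=.
    by apply/existsP; exists (u e); rewrite ueS /R; apply/existsP; exists e; rewrite eF !eqxx.
  move/subset_leq_card; rewrite !card_part.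
  rewrite (eq_bigr (fun _ => k.+1)) ?sum_nat_const; last by move=> *; exact: hu.
  rewrite (eq_bigr (fun _ => k.+1)) ?sum_nat_const; last by move=> *; exact: hv.
  by rewrite leq_pmul2r.
have fin : injective f by move=> x y; apply: fi; rewrite inE.
have [ea hea] : exists ea : U -> E, forall a, [/\ ea a \in F, u (ea a) = a & v (ea a) = f a].
  suff h : forall a, exists e, [/\ e \in F, u e = a & v e = f a].
    by have [ea hea] := fin_all_exists h; exists ea.
  move=> a; have /existsP[e /andP[eF /andP[/eqP ue /eqP ve]]] := fR a (in_setT a).
  by exists e.
have fbij : bijective f by apply: inj_card_bij fin _; rewrite eUV.
case: fbij => fi' ff' f'f.
pose M := [set ea a | a in [set: U]].
have inM e : (e \in M) = (e == ea (u e)).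
  apply/imsetP/eqP => [[a _ ->]|->]; first by case: (hea a) => _ -> _.
  by exists (u e).
pose F' := F :\: M.
have [col [colk [colu colv]]] : exists col : E -> nat, {in F', forall e, col e < k} /\
    {in F' &, forall e e', u e = u e' -> col e = col e' -> e = e'} /\
    {in F' &, forall e e', v e = v e' -> col e = col e' -> e = e'}.
  apply: IH.
    move=> a; have := hu a; rewrite (cardsD1 (ea a)).
    case: (hea a) => eF ue _; rewrite inE eF ue eqxx /= => [[<-]].
    apply: eq_card => e; rewrite !inE inM.
    by case: (eqVneq (u e) a) => [->|]; rewrite ?andbF ?andbT.
  move=> b; have := hv b; rewrite (cardsD1 (ea (fi' b))).
  case: (hea (fi' b)) => eF _ ve; rewrite inE eF ve f'f eqxx /= => [[<-]].
  apply: eq_card => e; rewrite !inE inM.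
  case: (eqVneq (v e) b) => [vb|]; rewrite ?andbF //= ?andbT.
  congr (~~ _ && _); apply/eqP/eqP => ee.
    have : v e = f (u e) by rewrite {1}ee; case: (hea (u e)) => _ _ ->.
    by rewrite vb => ->; rewrite ff' -ee.
  by rewrite {2}ee; case: (hea (fi' b)) => _ -> _; rewrite -ee.
exists (fun e => if e \in M then k else col e); split; [|split].
- move=> e eF; case: ifP => eM //; apply: ltnW; apply: colk; by rewrite inE eM.
- move=> e e' eF e'F ue; case: ifP => eM; case: ifP => e'M.
  + by move=> _; move: eM e'M; rewrite !inM => eM e'M; rewrite (eqP eM) (eqP e'M) ue.
  + move=> ke; have : col e' < k by apply: colk; rewrite inE e'M.
    by rewrite -ke ltnn.
  + move=> ke; have : col e < k by apply: colk; rewrite inE eM.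
    by rewrite ke ltnn.
  + by apply: colu => //; rewrite inE ?eM ?e'M.
- move=> e e' eF e'F ve; case: ifP => eM; case: ifP => e'M.
  + move=> _; move: eM e'M; rewrite !inM => eM e'M; rewrite (eqP eM) (eqP e'M).
    have fu : f (u e) = f (u e').
      by case: (hea (u e)) => _ _ <-; case: (hea (u e')) => _ _ <-; rewrite -(eqP eM) -(eqP e'M).
    by rewrite (fin _ _ fu).
  + move=> ke; have : col e' < k by apply: colk; rewrite inE e'M.
    by rewrite -ke ltnn.
  + move=> ke; have : col e < k by apply: colk; rewrite inE eM.
    by rewrite ke ltnn.
  + by apply: colv => //; rewrite inE ?eM ?e'M.
Qed.
End Konig.

Section Sched.
Variables (d g : nat) (hd : 0 < d) (hg : 0 < g) (pi : {perm 'I_(d*g)}).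

Lemma grp_lt (p : 'I_(d*g)) : p %/ d < g.
Proof. by rewrite ltn_divLR // [g * d]mulnC. Qed.
Definition grp (p : 'I_(d*g)) : 'I_g := Ordinal (grp_lt p).

Lemma step_mono (mem : 'I_(d*g) -> {set 'I_(d*g)}) (s : slot (d*g) g) j x : x \in mem j -> x \in step d mem s j.
Proof. by rewrite /step inE => ->. Qed.

Lemma recvP (s : slot (d*g) g) mem j (b : 'I_g) (i p : 'I_(d*g)) A : rcv s j = Some b -> i %/ d = b ->
  snd s i = Some (p, A) -> grp j \in A -> p \in step d mem s j.
Proof.
move=> hr hi hs hj; rewrite /step inE /received hr; apply/orP; right.
rewrite inE; apply/existsP; exists i; rewrite hi eqxx hs eqxx /=.
by apply/existsP; exists (grp j); rewrite hj /=.
Qed.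

Variables (m : nat) (kk : 'I_(d*g) -> nat) (q : 'I_(d*g) -> 'I_(d*g)).
Hypotheses (hkm : forall p, kk p %/ g < m) (hq : forall p, q p %/ d = kk p %% g)
  (hiq : forall p p', kk p = kk p' -> q p = q p' -> p = p')
  (hisrc : forall p p', kk p = kk p' -> p %/ d = p' %/ d -> p = p')
  (hidst : forall p p', kk p = kk p' -> pi p %/ d = pi p' %/ d -> p = p').

Definition rr p := kk p %/ g.

Lemma keq p p' : rr p = rr p' -> kk p %% g = kk p' %% g -> kk p = kk p'.
Proof. by rewrite /rr => e1 e2; rewrite (divn_eq (kk p) g) (divn_eq (kk p') g) e1 e2. Qed.

Lemma quniq p p' : rr p = rr p' -> q p = q p' -> p = p'.
Proof.
move=> r e; apply: hiq => //; apply: keq => //; by rewrite -!hq e.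
Qed.

Definition pk r j := [pick p | (rr p == r) && (q p == j)].

Lemma pkP r p : rr p = r -> pk r (q p) = Some p.
Proof.
move=> hr; rewrite /pk; case: pickP => [p' /andP[/eqP r' /eqP e]|/(_ p)]; last by rewrite hr !eqxx.
by congr Some; apply: quniq; rewrite ?r' ?hr.
Qed.

Lemma pkS r j p : pk r j = Some p -> rr p = r /\ q p = j.
Proof.
rewrite /pk; case: pickP => [p' /andP[/eqP r' /eqP e] [<-]|] //.
Qed.

Definition slotA r : slot (d*g) g :=
  Slot (fun i => if rr i == r then Some (i, [set grp (q i)]) else None)
       (fun j => match pk r j with Some p => Some (grp p) | None => None end).
Definition slotB r : slot (d*g) g :=
  Slot (fun j => match pk r j with Some p => Some (p, [set grp (pi p)]) | None => None end)
       (fun j => if rr ((pi^-1)%g j) == r then Some (grp (q ((pi^-1)%g j))) else None).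

Fixpoint schf (r cnt : nat) : seq (slot (d*g) g) :=
  match cnt with 0 => [::] | cnt'.+1 => slotA r :: slotB r :: schf r.+1 cnt' end.

Lemma size_schf r cnt : size (schf r cnt) = 2 * cnt.
Proof. by elim: cnt r => [|c IH] r //=; rewrite IH; lia. Qed.

Lemma run cnt : forall r (mem : 'I_(d*g) -> {set 'I_(d*g)}), r + cnt = m -> (forall p, p \in mem p) ->
  (forall p, rr p < r -> p \in mem (pi p)) -> routes_from d pi mem (schf r cnt).
Proof.
elim: cnt => [|c IH] r mem hrm h1 h2 /=.
  by move=> p; apply: h2; have := hkm p; rewrite /rr; lia.
split.
  split=> [i p A /=|i i' p p' A A' ne hdv /=].
    by case: ifP => // _ [<- _]; exact: h1.
  case: ifP => // /eqP ri [_ <-]; case: ifP => // /eqP ri' [_ <-].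
  rewrite disjoints1 inE; apply/negP => /eqP/(congr1 val) /= e.
  case/eqP: ne; apply: hisrc => //; apply: keq; first by rewrite ri ri'.
  by rewrite -!hq.
split.
  split=> [j p A /=|j j' p p' A A' ne hdv /=].
    case E: (pk r j) => [p0|] // [<- _]; case: (pkS E) => rp qp.
    apply: (@recvP _ _ _ (grp p0) p0 _ [set grp (q p0)]) => /=.
    - by rewrite E.
    - by [].
    - by rewrite rp eqxx.
    - by rewrite inE -qp; apply/eqP; apply: val_inj.
  case E: (pk r j) => [p0|] // [_ <-]; case E': (pk r j') => [p1|] // [_ <-].
  case: (pkS E) => rp qp; case: (pkS E') => rp' qp'.
  have kE : kk p0 = kk p1 by apply: keq; rewrite ?rp ?rp' // -!hq qp qp'.
  rewrite disjoints1 inE; apply/negP => /eqP/(congr1 val) /= e.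
  by case/eqP: ne; rewrite -qp -qp'; congr q; apply: hidst.
apply: IH; first by lia.
  by move=> p; do 2 apply: step_mono.
move=> p rp; case: (ltnP (rr p) r) => [lt|ge].
  by do 2 apply: step_mono; exact: h2.
have {rp ge} rp : rr p = r by lia.
apply: (@recvP _ _ _ (grp (q p)) (q p) _ [set grp (pi p)]) => /=.
- by rewrite permK rp eqxx.
- by [].
- by rewrite pkP.
- by rewrite inE.
Qed.

End Sched.

Lemma card_sumset (A B : finType) (P : pred (A + B)) :
  #|[set e | P e]| = #|[set x | P (inl x)]| + #|[set y | P (inr y)]|.
Proof.
rewrite -!sum1_card big_sumType /=; congr (_ + _); apply: eq_bigl => x; by rewrite !inE.
Qed.

Lemma card_fst (A B : finType) (a : A) : #|[set z : A * B | z.1 == a]| = #|B|.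
Proof.
have -> : [set z : A * B | z.1 == a] = setX [set a] [set: B].
  by apply/setP=> [[x y]]; rewrite !inE andbT.
by rewrite cardsX cards1 cardsT mul1n.
Qed.

Lemma card_snd (A B : finType) (b : B) : #|[set z : A * B | z.2 == b]| = #|A|.
Proof.
have -> : [set z : A * B | z.2 == b] = setX [set: A] [set b].
  by apply/setP=> [[x y]]; rewrite !inE.
by rewrite cardsX cards1 cardsT muln1.
Qed.

Lemma card_set0 (A : finType) : #|[set x : A | false]| = 0.
Proof. by apply/eqP; rewrite cards_eq0; apply/eqP/setP=> x; rewrite !inE. Qed.

Section Inst.
Variables (d g : nat) (hd : 0 < d) (hg : 0 < g) (pi : {perm 'I_(d*g)}).
Local Notation grp := (@grp d g hd).

Lemma card_grp (a : 'I_g) : #|[set p : 'I_(d*g) | grp p == a]| = d.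
Proof.
have lt (i : 'I_d) : a * d + i < d * g.
  have := ltn_ord a; have := ltn_ord i; nia.
pose h (i : 'I_d) : 'I_(d*g) := Ordinal (lt i).
have hi : injective h by move=> i i' /(congr1 val) /= e; apply: val_inj => /=; lia.
have -> : [set p : 'I_(d*g) | grp p == a] = h @: [set: 'I_d].
  apply/setP=> p; rewrite inE; apply/eqP/imsetP => [e|[i _ ->]].
    exists (Ordinal (ltn_pmod p hd)); rewrite ?inE //; apply: val_inj => /=.
    by rewrite {1}(divn_eq p d) -e.
  by apply: val_inj => /=; rewrite divnMDl // divn_small // addn0.
by rewrite card_imset // cardsT card_ord.
Qed.

Lemma card_grp_pi (b : 'I_g) : #|[set p : 'I_(d*g) | grp (pi p) == b]| = d.
Proof.
have -> : [set p : 'I_(d*g) | grp (pi p) == b] = pi @^-1: [set p | grp p == b].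
  by apply/setP=> p; rewrite !inE.
by rewrite card_preimset ?card_grp //; apply: perm_inj.
Qed.

Definition K := maxn d g.
Definition t := maxn d g - d.
Definition Ed := ('I_(d*g) + ('I_g * 'I_t + 'I_t * 'I_g))%type.
Definition Uv := ('I_g + 'I_t)%type.
Definition uE (e : Ed) : Uv := match e with
  | inl p => inl (grp p) | inr (inl (a, y)) => inl a | inr (inr (x, b)) => inr x end.
Definition vE (e : Ed) : Uv := match e with
  | inl p => inl (grp (pi p)) | inr (inl (a, y)) => inr y | inr (inr (x, b)) => inl b end.

Lemma colE : exists col : Ed -> nat, (forall e, col e < K) /\
    (forall e e', uE e = uE e' -> col e = col e' -> e = e') /\
    (forall e e', vE e = vE e' -> col e = col e' -> e = e').
Proof.
have [||col [h1 [h2 h3]]] := @konig Ed Uv Uv uE vE K [set: Ed].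
- case=> [a|x]; rewrite card_sumset card_sumset /=.
  + rewrite (eq_card (B := [set p | grp p == a])) ?card_grp; last by move=> p; rewrite !inE.
    rewrite (eq_card (B := [set z : 'I_g * 'I_t | z.1 == a])) ?card_fst ?card_ord; last by case=> ??; rewrite !inE.
    rewrite (eq_card (B := [set z : 'I_t * 'I_g | false])) ?card_set0; last by case=> ??; rewrite !inE.
    rewrite /K /t; lia.
  + rewrite (eq_card (B := [set p : 'I_(d*g) | false])) ?card_set0; last by move=> p; rewrite !inE.
    rewrite (eq_card (B := [set z : 'I_g * 'I_t | false])) ?card_set0; last by case=> ??; rewrite !inE.
    rewrite (eq_card (B := [set z : 'I_t * 'I_g | z.1 == x])) ?card_fst ?card_ord; last by case=> ??; rewrite !inE.
    have := ltn_ord x; rewrite /t /K; lia.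
- case=> [b|y]; rewrite card_sumset card_sumset /=.
  + rewrite (eq_card (B := [set p | grp (pi p) == b])) ?card_grp_pi; last by move=> p; rewrite !inE.
    rewrite (eq_card (B := [set z : 'I_g * 'I_t | false])) ?card_set0; last by case=> ??; rewrite !inE.
    rewrite (eq_card (B := [set z : 'I_t * 'I_g | z.2 == b])) ?card_snd ?card_ord; last by case=> ??; rewrite !inE.
    rewrite /K /t; lia.
  + rewrite (eq_card (B := [set p : 'I_(d*g) | false])) ?card_set0; last by move=> p; rewrite !inE.
    rewrite (eq_card (B := [set z : 'I_g * 'I_t | z.2 == y])) ?card_snd ?card_ord; last by case=> ??; rewrite !inE.
    rewrite (eq_card (B := [set z : 'I_t * 'I_g | false])) ?card_set0; last by case=> ??; rewrite !inE.
    have := ltn_ord y; rewrite /t /K; lia.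
exists col; split; [|split].
- by move=> e; apply: h1; rewrite inE.
- by move=> e e'; apply: h2; rewrite inE.
- by move=> e e'; apply: h3; rewrite inE.
Qed.

Section Final.
Variables (col : Ed -> nat) (hK : forall e, col e < K)
  (hu : forall e e', uE e = uE e' -> col e = col e' -> e = e')
  (hv : forall e e', vE e = vE e' -> col e = col e' -> e = e').

Definition Pk k := [set p : 'I_(d*g) | col (inl p) == k].

Lemma class_bound k : k < K -> #|Pk k| <= g - t.
Proof.
move=> kK.
pose Q := [set z : 'I_g * 'I_t | col (inr (inl z)) == k].
have a1 : #|Pk k| + #|Q| <= g.
  have e1 : #|grp @: Pk k| = #|Pk k|.
    apply: card_in_imset => p p'; rewrite !inE => /eqP c1 /eqP c2 e.
    have : (inl p : Ed) = inl p' by apply: hu; rewrite /= ?e // c1 c2.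
    by case.
  have e2 : #|(fun z => z.1) @: Q| = #|Q|.
    apply: card_in_imset => z z'; rewrite !inE => /eqP c1 /eqP c2 e.
    have : (inr (inl z) : Ed) = inr (inl z') by apply: hu; rewrite /= ?c1 ?c2 //; case: z z' e {c1 c2} => [??] [??] /= ->.
    by case.
  have e3 : grp @: Pk k :&: (fun z => z.1) @: Q = set0.
    apply/setP=> a; rewrite !inE; apply/negbTE/negP=> /andP[/imsetP[p] pP -> /imsetP[[a' y]]].
    rewrite !inE /= in pP * => zQ ea.
    have : (inl p : Ed) = inr (inl (a', y)) by apply: hu; rewrite /= ?ea // (eqP pP) (eqP zQ).
    by [].
  have := cardsUI (grp @: Pk k) ((fun z => z.1) @: Q).
  rewrite e1 e2 e3 cards0 addn0 => <-.
  by apply: leq_trans (max_card _) _; rewrite card_ord.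
have a2 : t <= #|Q|.
  case: (posnP t) => [t0|tpos]; first by rewrite [X in X <= _]t0.
  have Kg : K = g by move: tpos; rewrite /t /K; lia.
  have : [set: 'I_t] \subset (fun z => z.2) @: Q.
    apply/subsetP=> y _.
    have hlt a : col (inr (inl (a, y))) < g by have := hK (inr (inl (a, y))); rewrite Kg.
    pose h (a : 'I_g) : 'I_g := Ordinal (hlt a).
    have hi : injective h.
      move=> a a' /(congr1 val) /= e.
      have : (inr (inl (a, y)) : Ed) = inr (inl (a', y)) by apply: hv => //.
      by case.
    have kg : k < g by rewrite -Kg.
    have [h' hh' h'h] := injF_bij hi.
    apply/imsetP; exists (h' (Ordinal kg), y) => //.
    rewrite inE; apply/eqP.
    by have := congr1 val (h'h (Ordinal kg)).
  move/subset_leq_card; rewrite cardsT card_ord => h.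
  by apply: leq_trans h (leq_imset_card _ _).
lia.
Qed.

Definition kk (p : 'I_(d*g)) := col (inl p).
Definition idx (p : 'I_(d*g)) := index p (enum (Pk (kk p))).

Lemma idx_lt p : idx p < d.
Proof.
have pin : p \in enum (Pk (kk p)) by rewrite mem_enum inE.
have := index_mem p (enum (Pk (kk p))); rewrite pin -cardE => h.
have := class_bound (hK (inl p)); rewrite -/(kk p).
rewrite /idx; move: h; rewrite /t; lia.
Qed.

Lemma qlt p : (kk p %% g) * d + idx p < d * g.
Proof. have := idx_lt p; have := ltn_pmod (kk p) hg; nia. Qed.

Definition qq p : 'I_(d*g) := Ordinal (qlt p).

Lemma ceil_lt k : k < K -> k %/ g < ceil_div d g.
Proof.
rewrite /K /ceil_div => kK.
case: (leqP d g) => dg.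
  have -> : k %/ g = 0 by apply: divn_small; lia.
  by rewrite divn_gt0 //; lia.
have : (k + g) %/ g <= (d + g - 1) %/ g by apply: leq_div2r; lia.
rewrite (divnDr k (dvdnn g)) divnn hg.
lia.
Qed.

Lemma routeE : exists sched : seq (slot (d * g) g),
    size sched = 2 * ceil_div d g /\ @routes d g pi sched.
Proof.
exists (schf hd pi kk qq 0 (ceil_div d g)); split; first by rewrite size_schf.
apply: run => //.
- by move=> p; apply: ceil_lt; apply: hK.
- by move=> p /=; rewrite divnMDl // divn_small ?idx_lt // addn0.
- move=> p p' e /(congr1 val) /= e'.
  have ei : idx p = idx p' by move: e'; rewrite e; lia.
  move: ei; rewrite /idx e => ei.
  have pin : p \in enum (Pk (kk p')) by rewrite mem_enum inE -e.
  have pin' : p' \in enum (Pk (kk p')) by rewrite mem_enum inE.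
  by rewrite -(nth_index p pin) ei (nth_index p pin').
- move=> p p' e ed.
  have : (inl p : Ed) = inl p' by apply: hu => //=; congr inl; apply: val_inj.
  by case.
- move=> p p' e ed.
  have : (inl p : Ed) = inl p' by apply: hv => //=; congr inl; apply: val_inj.
  by case.
- by move=> p; rewrite inE.
Qed.
End Final.
End Inst.

Theorem theorem2 (d g : nat) (hd : 0 < d) (hg : 0 < g) (pi : {perm 'I_(d * g)}) :
  exists sched : seq (slot (d * g) g),
    size sched = (if d == 1 then 1 else 2 * ceil_div d g) /\ @routes d g pi sched.
Proof.
case: ifP => [/eqP d1|dn1]; last first.
  have [col [hK [hu hv]]] := colE hd hg pi.
  exact: (routeE hg hK hu hv).
have e1 : forall x, x %/ d = x by move=> x; rewrite d1 divn1.
exists [:: Slot (fun i => Some (i, [set grp hd (pi i)])) (fun j => Some (grp hd ((pi^-1)%g j)))].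
split => //.
split.
  split=> [i p A [<- _]|i i' p p' A A' ne hdv]; first by rewrite inE.
  by rewrite !e1 in hdv; case/eqP: ne; apply: val_inj.
move=> i /=.
apply: (@recvP d g hd _ _ (pi i) (grp hd i) i i [set grp hd (pi i)]).
- by rewrite /= permK.
- by [].
- by [].
- by rewrite inE.
Qed.
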